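(* Let $\epsilon>0$ and let $D$ be a properly totally coloured digraph on at least $2\epsilon^{-2}$ vertices with rainbow vertex set. Let $v\in V(D)$ and let $\delta^+=\min\{d^+(x): d^{\mathrm{rb}}(v,x)\leq\epsilon^{-1}\}$. Then there is a set $N\subseteq V(D)$ such that $d^{\mathrm{rb}}(v,u)\leq\epsilon^{-1}$ for every $u\in N$ and $\delta^+(D[N])\geq\delta^+-2\epsilon|D|$.
   Context: Digraphs are finite, without loops and without multiple edges (an edge may appear in both directions). A path is a sequence of distinct vertices with consecutive vertices joined by directed edges; its length is its number of edges. A total colouring assigns colours to vertices and edges; it is proper if outgoing edges at any vertex have distinct colours, ingoing edges at any vertex have distinct colours, adjacent vertices have distinct colours, and every edge has a colour different from both its endpoints. $D$ has rainbow vertex set if all vertices have distinct colours. A path is rainbow if all its vertices and edges have pairwise distinct colours. $d^{\mathrm{rb}}(u,x)$ is the length of a shortest rainbow path from $u$ to $x$. $d^+(x)$ is the out-degree of $x$, $D[N]$ the induced subdigraph, $\delta^+$ the minimum out-degree, $|D|$ the number of vertices. *)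

(* Defs.v *)
From HB Require Import structures.
From mathcomp Require Import all_boot all_order all_algebra.
Set Implicit Arguments. Unset Strict Implicit. Unset Printing Implicit Defensive.
Import Order.TTheory GRing.Theory Num.Theory.
Local Open Scope ring_scope.

(* A digraph on a finite vertex type V is an edge relation
   e : rel V (no multiple edges automatically; edges may go both ways).
   A total colouring is a vertex colouring cv and an edge colouring ce
   (ce x y is the colour of the edge x -> y; only meaningful when e x y). *)

Section Digraph.
Variables (V : finType) (C : eqType) (e : rel V) (cv : V -> C) (ce : V -> V -> C).

Definition loopless : Prop := forall x, ~~ e x x.

Definition proper_total_colouring : Prop :=
  [/\ (forall x y z, e x y -> e x z -> y != z -> ce x y != ce x z),
      (forall x y z, e y x -> e z x -> y != z -> ce y x != ce z x),
      (forall x y, e x y -> cv x != cv y)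
    & (forall x y, e x y -> (ce x y != cv x) && (ce x y != cv y))].

Definition rainbow_vertex_set : Prop := injective cv.

(* u :: p is a rainbow path from u to x; its length is size p *)
Definition rainbow_path (u x : V) (p : seq V) : Prop :=
  [/\ path e u p, last u p = x, uniq (u :: p)
    & uniq (map cv (u :: p) ++ pairmap ce u p)].

Definition outdeg (x : V) : nat := #|[set y | e x y]|.

Definition outdeg_in (N : {set V}) (x : V) : nat := #|[set y in N | e x y]|.
End Digraph.

Definition rb_dist_le (R : realFieldType) (V : finType) (C : eqType) (e : rel V)
  (cv : V -> C) (ce : V -> V -> C) (u x : V) (k : R) : Prop :=
  exists p : seq V, rainbow_path e cv ce u x p /\ (size p)%:R <= k.

Definition min_outdeg_ball (R : realFieldType) (V : finType) (C : eqType) (e : rel V)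
  (cv : V -> C) (ce : V -> V -> C) (v : V) (k : R) (d : nat) : Prop :=
  (exists x, rb_dist_le e cv ce v x k /\ outdeg e x = d) /\
  (forall x, rb_dist_le e cv ce v x k -> (d <= outdeg e x)%N).

(* Main.v *)
Require Import Defs.
From HB Require Import structures.
From mathcomp Require Import all_boot all_order all_algebra.
From mathcomp Require Import zify ring lra.
From Stdlib Require Import ClassicalEpsilon.
Import Order.TTheory GRing.Theory Num.Theory.
Set Implicit Arguments. Unset Strict Implicit. Unset Printing Implicit Defensive.

Definition pb (P : Prop) : bool := if excluded_middle_informative P then true else false.
Lemma pbP (P : Prop) : reflect P (pb P).
Proof. rewrite /pb; case: excluded_middle_informative => h; constructor => //. Qed.

Lemma tri2 m : (2 * \sum_(i < m) (i : nat) = m * m.-1)%N.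
Proof.
elim: m => [|m IH]; first by rewrite big_ord0.
rewrite big_ord_recr /= mulnDr IH; case: m {IH} => [|m] //=; lia.
Qed.

Lemma perm2 (T : eqType) (A B : seq T) c1 c2 :
  perm_eq (rcons A c1 ++ rcons B c2) (c1 :: c2 :: (A ++ B)).
Proof.
apply/permP => P; rewrite -!cats1 !count_cat /=.
rewrite count_cat; move: (count P A) (count P B) (nat_of_bool (P c1)) (nat_of_bool (P c2)) => a b x y; lia.
Qed.

Section H.
Variables (V : finType) (C : eqType) (e : rel V) (cv : V -> C) (ce : V -> V -> C).
Hypotheses (Hloop : loopless e) (Hprop : proper_total_colouring e cv ce)
  (Hinj : rainbow_vertex_set cv).
Variable v : V.

Lemma prefix_rb x p y : rainbow_path e cv ce v x p -> y \in v :: p ->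
  exists q, rainbow_path e cv ce v y q /\ (size q <= size p)%N.
Proof.
move=> [Hp Hl Hu Hc]; rewrite in_cons => /orP [/eqP -> | yp].
  by exists [::]; split => //; split.
case/path.splitP: yp Hp Hl Hu Hc => p1 p2 Hp Hl Hu Hc.
exists (rcons p1 y); split; last by rewrite size_cat leq_addr.
split.
- by move: Hp; rewrite cat_path => /andP[].
- by rewrite last_rcons.
- by move: Hu; rewrite -cat_cons cat_uniq => /and3P[].
- move: Hc; rewrite -cat_cons map_cat pairmap_cat => H.
  apply: subseq_uniq H; apply: cat_subseq; exact: prefix_subseq.
Qed.

Lemma extend_rb x p y : rainbow_path e cv ce v x p -> e x y -> y \notin v :: p ->
  cv y \notin pairmap ce v p ->
  ce x y \notin map cv (belast v p) ++ pairmap ce v p ->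
  rainbow_path e cv ce v y (rcons p y).
Proof.
move=> [Hp Hl Hu Hc] exy ynp cy cexy.
have [_ _ _ H4] := Hprop.
have /andP [ne1 ne2] := H4 _ _ exy.
split.
- by rewrite rcons_path Hp Hl exy.
- by rewrite last_rcons.
- by rewrite -rcons_cons rcons_uniq ynp Hu.
have Hpm : pairmap ce v (rcons p y) = rcons (pairmap ce v p) (ce x y).
  by rewrite -cats1 pairmap_cat /= Hl cats1.
rewrite Hpm -rcons_cons map_rcons.
set A := map cv (v :: p); set B := pairmap ce v p; move: cy Hc; rewrite -/A -/B => cy Hc.
have Hperm := perm2 A B (cv y) (ce x y).
have cA : cv y \notin A by rewrite /A (mem_map Hinj).
have eA : ce x y \notin A.
  rewrite /A lastI Hl map_rcons mem_rcons in_cons negb_or ne1 /=.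
  by apply: contra cexy; rewrite mem_cat => ->.
have eB : ce x y \notin B by apply: contra cexy; rewrite mem_cat orbC => ->.
clearbody A B. rewrite (perm_uniq Hperm) !cons_uniq !in_cons !mem_cat (negbTE cA) (negbTE cy) (negbTE eA) (negbTE eB) Hc.
by rewrite eq_sym (negbTE ne2).
Qed.

Lemma card_cv (cs : seq C) : (#|[set y | cv y \in cs]| <= size cs)%N.
Proof.
rewrite cardE -(size_map cv); apply: uniq_leq_size.
  by rewrite (map_inj_uniq Hinj) enum_uniq.
by move=> c /mapP [y]; rewrite mem_enum inE => H ->.
Qed.

Lemma card_ce x (cs : seq C) : (#|[set y | e x y && (ce x y \in cs)]| <= size cs)%N.
Proof.
have [H1 _ _ _] := Hprop.
rewrite cardE -(size_map (ce x)); apply: uniq_leq_size.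
  rewrite map_inj_in_uniq ?enum_uniq //.
  move=> y1 y2; rewrite !mem_enum !inE => /andP [e1 _] /andP [e2 _] Heq.
  case: (y1 =P y2) => // /eqP ne.
  by have := H1 _ _ _ e1 e2 ne; rewrite Heq eqxx.
by move=> c /mapP [y]; rewrite mem_enum inE => /andP [_ H] ->.
Qed.

Definition Bset (i : nat) : {set V} :=
  locked [set x | pb (exists p, rainbow_path e cv ce v x p /\ (size p <= i)%N)].

Lemma BP i x : reflect (exists p, rainbow_path e cv ce v x p /\ (size p <= i)%N)
  (x \in Bset i).
Proof. rewrite /Bset -lock inE; exact: pbP. Qed.

Lemma Bmono i : Bset i \subset Bset i.+1.
Proof.
apply/subsetP => x /BP [p [H1 H2]]; apply/BP; exists p; split => //; exact: leqW.
Qed.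

Lemma sum_gaps m : (\sum_(i < m) #|Bset i.+1 :\: Bset i| <= #|Bset m|)%N.
Proof.
elim: m => [|m IH]; first by rewrite big_ord0.
rewrite big_ord_recr /= cardsD (setIidPr (Bmono m)).
have := subset_leq_card (Bmono m); move: IH; move: (\sum_(i < m) _) (#|Bset m|) (#|Bset m.+1|) => a b c; lia.
Qed.

Lemma deg_bound i x : x \in Bset i ->
  (outdeg e x <= outdeg_in e (Bset i) x + #|Bset i.+1 :\: Bset i| + 3 * i)%N.
Proof.
case/BP => p [Hr Hs].
set Bad := [set y | cv y \in pairmap ce v p] :|:
  [set y | e x y && (ce x y \in map cv (belast v p) ++ pairmap ce v p)].
have cover : [set y | e x y] \subset
   ([set y in Bset i | e x y] :|: (Bset i.+1 :\: Bset i)) :|: Bad.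
  apply/subsetP => y; rewrite inE => exy.
  case: (boolP (y \in Bset i)) => yB; first by rewrite !inE yB exy.
  case: (boolP (cv y \in pairmap ce v p)) => c1; first by rewrite !inE c1 ?orbT.
  case: (boolP (ce x y \in map cv (belast v p) ++ pairmap ce v p)) => c2.
    by rewrite !inE exy c2 ?orbT.
  have ynp : y \notin v :: p.
    apply/negP => yin; have [q [Hq Hsq]] := prefix_rb Hr yin.
    apply: (negP yB); apply/BP; exists q; split => //; exact: leq_trans Hsq Hs.
  have Hr' := extend_rb Hr exy ynp c1 c2.
  have yB1 : y \in Bset i.+1 by apply/BP; exists (rcons p y); rewrite size_rcons.
  by rewrite !inE yB1 yB orbT.
have h1 := subset_leq_card cover.
have h2 := leq_card_setU ([set y in Bset i | e x y] :|: (Bset i.+1 :\: Bset i)) Bad.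
have h3 := leq_card_setU [set y in Bset i | e x y] (Bset i.+1 :\: Bset i).
have h4 := leq_card_setU [set y | cv y \in pairmap ce v p]
  [set y | e x y && (ce x y \in map cv (belast v p) ++ pairmap ce v p)].
have h5 := card_cv (pairmap ce v p).
have h6 := card_ce x (map cv (belast v p) ++ pairmap ce v p).
move: h5 h6; rewrite size_cat size_map size_belast size_pairmap => h5 h6.
rewrite /outdeg /outdeg_in.
move: h1 h2 h3 h4 h5 h6 Hs.
set a := #|[set y | e x y]|; set b := #|[set y in Bset i | e x y]|.
set c := #|Bset i.+1 :\: Bset i|.
set d1 := #|[set y | cv y \in pairmap ce v p]|.
set d2 := #|[set y | e x y && _]|.
set u1 := #|_ :|: Bad|; set u2 := #|_ :|: (Bset i.+1 :\: Bset i)|.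
set u3 := #|Bad|.
move=> h1 [h2 _] [h3 _] [h4 _]; lia.
Qed.

End H.

Local Open Scope ring_scope.

Lemma avg (m : nat) (f : nat -> nat) : (0 < m)%N ->
  exists i, (i < m)%N /\ (m * f i <= \sum_(j < m) f j)%N.
Proof.
move=> m0; set S := \sum_(j < m) f j.
case: (boolP [exists j : 'I_m, m * f j <= S]%N) => [/existsP [j Hj] | /existsPn H].
  by exists j.
exfalso.
have : (\sum_(j < m) S.+1 <= \sum_(j < m) m * f j)%N.
  by apply: leq_sum => j _; rewrite ltnNge; exact: H.
rewrite -big_distrr /= -/S sum_nat_const card_ord.
clear H; move: S => S; nia.
Qed.

Lemma floor_ex (R : realFieldType) (t : R) k : 0 <= t -> t < k%:R ->
  exists M : nat, M%:R <= t /\ t < M.+1%:R.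
Proof.
move=> t0; elim: k => [|k IH]; first by move=> h; have := le_lt_trans t0 h; rewrite ltxx.
move=> h; case: (ltP t k%:R) => hk; first exact: IH.
by exists k.
Qed.


Theorem mainTheorem9 (R : realFieldType) (V : finType) (C : eqType)
  (e : rel V) (cv : V -> C) (ce : V -> V -> C) (eps : R) :
  0 < eps ->
  loopless e ->
  proper_total_colouring e cv ce ->
  rainbow_vertex_set cv ->
  2 / eps ^+ 2 <= (#|V|)%:R ->
  forall (v : V) (delta : nat),
    min_outdeg_ball e cv ce v eps^-1 delta ->
    exists N : {set V},
      [/\ N != set0,
          (forall u, u \in N -> rb_dist_le e cv ce v u eps^-1)
        & (forall x, x \in N ->
             delta%:R - 2 * eps * (#|V|)%:R <= (outdeg_in e N x)%:R)].
Proof.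
move=> eps0 Hloop Hprop Hinj Hn v delta [_ Hmin].
set t := eps^-1.
have t0 : 0 < t by rewrite invr_gt0.
have te : t * eps = 1 by rewrite mulVf // gt_eqF.
set n := #|V|.
have Hn2 : 2 * t ^+ 2 <= n%:R by rewrite /t exprVn.
have tn : t < n.+1%:R.
  case: (ltP t 1) => h.
    apply: lt_le_trans h _; by rewrite ler1n.
  rewrite -addn1 natrD; nra.
have [M [HM1 HM2]] := floor_ex (ltW t0) tn.
set m := M.+1.
pose f i := (#|Bset e cv ce v i.+1 :\: Bset e cv ce v i| + 3 * i)%N.
have [i [ilt Hi]] := avg f (ltn0Sn M).
have Hsum : (\sum_(j < m) f j <= n + 3 * \sum_(j < m) (j : nat))%N.
  rewrite /f big_split /= -big_distrr /=; apply: leq_add => //.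
  apply: leq_trans (sum_gaps e cv ce v m) _; exact: max_card.
have Htri := tri2 m.
have key : (2 * m * f i <= 2 * n + 3 * (m * M))%N.
  move: Hi Hsum Htri; rewrite /m /=.
  move: (\sum_(j < M.+1) f j) (\sum_(j < M.+1) (j : nat)) (f i) => S T F; nia.
exists (Bset e cv ce v i); split.
- apply/set0Pn; exists v; apply/BP; exists [::]; split => //; split => //.
- move=> u /BP [p [Hp Hs]]; exists p; split => //.
  apply: le_trans HM1; rewrite ler_nat; lia.
- move=> x xB.
  have dx : (delta <= outdeg e x)%N.
    apply: Hmin; have /BP [p [Hp Hs]] := xB; exists p; split => //.
    apply: le_trans HM1; rewrite ler_nat; lia.
  have hb := deg_bound Hprop Hinj xB.
  move: key hb; rewrite -/(f i); set F := f i; set od := outdeg_in _ _ _ => key hb.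
  have hd : (delta <= od + F)%N by rewrite /F /f; lia.
  have kR : 2 * m%:R * F%:R <= 2 * n%:R + 3 * (m%:R * M%:R) :> R.
    have e1 : (2 * m * F)%N%:R = 2 * m%:R * F%:R :> R by rewrite !natrM.
    have e2 : (2 * n + 3 * (m * M))%N%:R = 2 * n%:R + 3 * (m%:R * M%:R) :> R by rewrite natrD !natrM.
    by rewrite -e1 -e2 ler_nat.
  have hdR : delta%:R <= od%:R + F%:R :> R by rewrite -natrD ler_nat.
  have mR : m%:R = M%:R + 1 :> R by rewrite /m -addn1 natrD.
  rewrite mR in kR HM2.
  have n0 : 0 <= n%:R :> R by [].
  have M0 : 0 <= M%:R :> R by [].
  have F0 : 0 <= F%:R :> R by [].
  have ha : 0 <= (M%:R + 1 - t) * n%:R by apply: mulr_ge0 => //; lra.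
  have hb2 : 2 * t ^+ 2 * (M%:R + 1) <= n%:R * (M%:R + 1) by apply: ler_wpM2r => //; lra.
  have hc : t * (M%:R + 1) * M%:R <= t * (M%:R + 1) * t.
    by apply: ler_wpM2l => //; apply: mulr_ge0; lra.
  have h1 : t * (2 * n%:R + 3 * ((M%:R + 1) * M%:R)) <= 4 * (M%:R + 1) * n%:R.
    have e2 : t ^+ 2 = t * t by rewrite expr2.
    rewrite e2 in hb2; nra.
  have h2 : t * F%:R <= 2 * n%:R.
    have h3 : 2 * (M%:R + 1) * (t * F%:R) <= 2 * (M%:R + 1) * (2 * n%:R).
      have := ler_wpM2l (ltW t0) kR; nra.
    by rewrite ler_pM2l in h3 => //; lra.
  have h4 : F%:R <= 2 * eps * n%:R.
    have := ler_wpM2l (ltW eps0) h2.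
    by rewrite mulrA (mulrC eps t) te mul1r => ?; lra.
  lra.
Qed.
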